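(* Let $\{\mu_n\}$ and $\mu$ be Borel probability measures on $\mathbb R^s$ with compact supports, and suppose $\mu_n\to\mu$ weakly. If $\mathcal Z(\mu)=\emptyset$, then $\{\mu_n\}$ has a subsequence $\{\mu_{n_k}\}$ that is an equi-positive family, i.e., there is $\epsilon_0>0$ such that for every $x\in[0,1)^s$ and every $k$ there exists $m\in\mathbb Z^s$ with $|\widehat{\mu_{n_k}}(x+m)|>\epsilon_0$.
   Context: $\widehat\mu(\xi)=\int e^{2\pi i\langle x,\xi\rangle}d\mu(x)$, and $\mathcal Z(\mu)=\{\xi\in[0,1)^s:\widehat\mu(\xi+k)=0\text{ for all }k\in\mathbb Z^s\}$. Weak convergence means $\int f\,d\mu_n\to\int f\,d\mu$ for all continuous compactly supported $f$. *)

(* Defs.v *)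
From HB Require Import structures.
From mathcomp Require Import all_boot all_order all_algebra.
From mathcomp Require Import all_classical all_reals all_analysis.
Set Implicit Arguments. Unset Strict Implicit. Unset Printing Implicit Defensive.
Import Order.TTheory GRing.Theory Num.Theory.
Import numFieldNormedType.Exports.
Local Open Scope classical_set_scope.
Local Open Scope ring_scope.

Definition borelRs (R : realType) (s : nat) :=
  g_sigma_algebraType (open : set (set 'rV[R]_s)).

Definition dotv (R : realType) (s : nat) (x xi : 'rV[R]_s) : R :=
  \sum_(i < s) x ord0 i * xi ord0 i.

(* Real and imaginary parts of  \hat mu (xi) = \int e^{2 pi i <x,xi>} d mu(x) *)
Definition ft_re (R : realType) (s : nat)
  (mu : {measure set (borelRs R s) -> \bar R}) (xi : 'rV[R]_s) : R :=
  Rintegral mu setT (fun x : borelRs R s => cos (2 * pi * dotv x xi)).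

Definition ft_im (R : realType) (s : nat)
  (mu : {measure set (borelRs R s) -> \bar R}) (xi : 'rV[R]_s) : R :=
  Rintegral mu setT (fun x : borelRs R s => sin (2 * pi * dotv x xi)).

Definition ft_abs (R : realType) (s : nat)
  (mu : {measure set (borelRs R s) -> \bar R}) (xi : 'rV[R]_s) : R :=
  Num.sqrt (ft_re mu xi ^+ 2 + ft_im mu xi ^+ 2).

Definition intvec (R : realType) (s : nat) (k : 'rV[int]_s) : 'rV[R]_s :=
  map_mx (fun z : int => z%:~R) k.

Definition unit_cube (R : realType) (s : nat) : set 'rV[R]_s :=
  [set x | forall i : 'I_s, 0 <= x ord0 i < 1].

Definition zero_set (R : realType) (s : nat)
  (mu : {measure set (borelRs R s) -> \bar R}) : set 'rV[R]_s :=
  [set xi | @unit_cube R s xi /\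
            forall k : 'rV[int]_s, ft_abs mu (xi + @intvec R s k) = 0].

Definition compact_support (R : realType) (s : nat)
  (mu : {measure set (borelRs R s) -> \bar R}) : Prop :=
  exists K : set 'rV[R]_s, compact K /\ mu (~` K) = 0%E.

Definition weak_cvg (R : realType) (s : nat)
  (mu_ : nat -> {measure set (borelRs R s) -> \bar R})
  (mu : {measure set (borelRs R s) -> \bar R}) : Prop :=
  forall f : 'rV[R]_s -> R, continuous f ->
    (exists K : set 'rV[R]_s, compact K /\ (forall x, ~ K x -> f x = 0)) ->
    (fun n => Rintegral (mu_ n) setT (f : borelRs R s -> R)) @ \oo
      --> Rintegral mu setT (f : borelRs R s -> R).

(* Main.v *)
Require Import Defs.
From HB Require Import structures.
From mathcomp Require Import all_boot all_order all_algebra.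
From mathcomp Require Import all_classical all_reals all_analysis.
From mathcomp Require Import ring lra.
Import Order.TTheory GRing.Theory Num.Theory.
Import numFieldNormedType.Exports.
Local Open Scope classical_set_scope.
Local Open Scope ring_scope.

Section S.
Variables (R : realType) (s : nat).
Notation V := 'rV[R]_s.
Notation T := (borelRs R s).

Lemma cont_meas (g : V -> R) : continuous g -> measurable_fun setT (g : T -> R).
Proof.
move=> cg; apply: (measurability _ (measurable_realfun.RGenOpens.measurableE R)).
move=> _ [_ [a [b ->]] <-]; rewrite setTI.
apply: sub_sigma_algebra.
by apply: (proj1 (continuousP g) cg); exact: interval_open.
Qed.

Lemma coord_le (x : V) i : `|x ord0 i| <= `|x|.
Proof.
have -> : `|x| = mx_norm x by [].
rewrite mx_normrE.
exact: (le_bigmax _ (fun ij : 'I_1 * 'I_s => `|x ij.1 ij.2|) (ord0, i)).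
Qed.

Lemma lip_cont (f : V -> R) k : (forall x y, `|f x - f y| <= k * `|x - y|) -> continuous f.
Proof.
move=> H x; apply/(@cvgrPdist_lt _ _ _ (nbhs x) (nbhs_filter x)) => e e0.
have k1 : 0 < `|k| + 1 by rewrite ltr_wpDl.
have ek : 0 < e / (`|k| + 1) by rewrite divr_gt0.
have : \forall y \near x, `|x - y| < e / (`|k| + 1).
  by apply/nbhs_ballP; exists (e / (`|k| + 1)) => // y; rewrite -ball_normE.
apply: filterS => y hy.
apply: le_lt_trans (H x y) _.
apply: (le_lt_trans (ler_wpM2r (normr_ge0 _) (ler_norm k))).
apply: (le_lt_trans (y := (`|k| + 1) * `|x - y|)).
  by rewrite ler_wpM2r // lerDl.
by rewrite mulrC -ltr_pdivlMr.
Qed.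

Definition trig (b : bool) : R -> R := if b then cos else sin.

Lemma trig_cont b : continuous (trig b).
Proof. by case: b; [exact: continuous_cos | exact: continuous_sin]. Qed.

Lemma trig_le1 b x : `|trig b x| <= 1.
Proof. by case: b; [exact: cos_max | exact: sin_max]. Qed.

Lemma trig_lip b x y : `|trig b x - trig b y| <= `|x - y|.
Proof.
wlog xy : x y / y <= x.
  move=> W; case: (leP y x) => [/W//|/ltW/W]; by rewrite distrC [`|y - x|]distrC.
case: b => /=.
  have [c _ ->] := MVT_segment xy (fun z _ => is_derive_cos z)
     (continuous_subspaceT (@continuous_cos R)).
  by rewrite normrM normrN ler_piMl ?sin_max.
have [c _ ->] := MVT_segment xy (fun z _ => is_derive_sin z)
     (continuous_subspaceT (@continuous_sin R)).
by rewrite normrM ler_piMl ?cos_max.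
Qed.

Lemma dotvBl (x y xi : V) : dotv x xi - dotv y xi = dotv (x - y) xi.
Proof. by rewrite /dotv -sumrB; apply: eq_bigr => i _; rewrite !mxE mulrBl. Qed.

Lemma dotvBr (x xi eta : V) : dotv x xi - dotv x eta = dotv x (xi - eta).
Proof. by rewrite /dotv -sumrB; apply: eq_bigr => i _; rewrite !mxE mulrBr. Qed.

Lemma dotv_le (x xi : V) : `|dotv x xi| <= s%:R * (`|x| * `|xi|).
Proof.
rewrite /dotv; apply: le_trans (ler_norm_sum _ _ _) _.
have -> : s%:R * (`|x| * `|xi|) = \sum_(i < s) (`|x| * `|xi|).
  by rewrite sumr_const card_ord mulr_natl.
by apply: ler_sum => i _; rewrite normrM ler_pM // coord_le.
Qed.

Lemma e_lip b (xi x y : V) :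
  `|trig b (2 * pi * dotv x xi) - trig b (2 * pi * dotv y xi)| <=
    (2 * pi * (s%:R * `|xi|)) * `|x - y|.
Proof.
apply: le_trans (trig_lip _ _ _) _.
rewrite -mulrBr dotvBl normrM -mulrA.
rewrite [`|2 * pi|]ger0_norm ?mulr_ge0 ?pi_ge0 //.
apply: ler_wpM2l; first by rewrite mulr_ge0 ?pi_ge0.
by rewrite -mulrA [`|xi| * _]mulrC dotv_le.
Qed.

Lemma e_cont b (xi : V) : continuous (fun x : V => trig b (2 * pi * dotv x xi)).
Proof. by apply: lip_cont => x y; exact: e_lip. Qed.

Definition clamp (a : R) : R := Num.min 1 (Num.max 0 a).

Lemma clamp_lip a b : `|clamp a - clamp b| <= `|a - b|.
Proof.
rewrite /clamp ler_norml.
have h1 := ler_norm (a - b).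
have h3 : b - a <= `|a - b| by rewrite distrC ler_norm.
move: h1 h3; move: (`|a - b|) => t h1 h3.
rewrite !maxEle !minEle.
case: (leP 0 a) => ?; case: (leP 0 b) => ? /=; repeat case: ifP => ?; apply/andP; split; lra.
Qed.

Lemma clamp_ge0 a : 0 <= clamp a.
Proof. rewrite /clamp !maxEle !minEle; case: (leP 0 a) => ? /=; repeat case: ifP => ?; lra. Qed.
Lemma clamp_le1 a : clamp a <= 1.
Proof. rewrite /clamp !maxEle !minEle; case: (leP 0 a) => ? /=; repeat case: ifP => ?; lra. Qed.
Lemma clamp1 a : 1 <= a -> clamp a = 1.
Proof. move=> h; rewrite /clamp !maxEle !minEle; case: (leP 0 a) => ? /=; repeat case: ifP => ?; lra. Qed.
Lemma clamp0 a : a <= 0 -> clamp a = 0.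
Proof. move=> h; rewrite /clamp !maxEle !minEle; case: (leP 0 a) => ? /=; repeat case: ifP => ?; lra. Qed.

Definition cutoff (r : R) (x : V) : R := clamp (r + 1 - `|x|).

Lemma cutoff_lip r (x y : V) : `|cutoff r x - cutoff r y| <= 1 * `|x - y|.
Proof.
rewrite mul1r; apply: le_trans (clamp_lip _ _) _.
have -> : r + 1 - `|x| - (r + 1 - `|y|) = `|y| - `|x| by ring.
by rewrite distrC; apply: le_trans (ler_dist_dist _ _) _.
Qed.

Lemma cutoff_cont r : continuous (cutoff r).
Proof. by apply: lip_cont => x y; exact: cutoff_lip. Qed.

Lemma cutoff_ge0 r x : 0 <= cutoff r x.
Proof. exact: clamp_ge0. Qed.

Lemma cutoff_le1 r x : cutoff r x <= 1.
Proof. exact: clamp_le1. Qed.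

Lemma cutoff1 r x : `|x| <= r -> cutoff r x = 1.
Proof. by move=> h; apply: clamp1; lra. Qed.

Lemma cutoff0 r x : r + 1 <= `|x| -> cutoff r x = 0.
Proof. by move=> h; apply: clamp0; lra. Qed.

Lemma cutoff_norm r x : 0 <= r -> cutoff r x * `|x| <= r + 1.
Proof.
move=> r0; case: (leP (r + 1) `|x|) => h.
  by rewrite cutoff0 // mul0r; lra.
rewrite -[r + 1]mul1r; apply: ler_pM => //; [exact: cutoff_ge0|exact: cutoff_le1|exact: ltW].
Qed.


Lemma bnd_int (nu : probability T R) (g : T -> R) M :
  measurable_fun setT g -> (forall x, `|g x| <= M) -> nu.-integrable setT (EFin \o g).
Proof.
move=> mg gM; apply: measurable_bounded_integrable => //.
  by rewrite [X in (X < _)%E](_ : _ = 1%E) ?ltry //; exact: (probability_setT nu).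
exists M; split; first by apply: ger0_real; exact: le_trans (normr_ge0 _) (gM 0).
by move=> y My x _; apply: le_trans (gM x) (ltW My).
Qed.

Lemma Rint_cst (nu : probability T R) c : Rintegral nu setT (fun _ => c) = c.
Proof.
rewrite Rintegral_cst // [fine _](_ : _ = 1) ?mulr1 //.
exact: (congr1 fine (probability_setT nu)).
Qed.

Lemma GI (nu : probability T R) (g h k : T -> R) Mg Mh Mk :
  measurable_fun setT g -> measurable_fun setT h -> measurable_fun setT k ->
  (forall x, `|g x| <= Mg) -> (forall x, `|h x| <= Mh) -> (forall x, `|k x| <= Mk) ->
  (forall x, `|g x - h x| <= k x) ->
  `|Rintegral nu setT g - Rintegral nu setT h| <= Rintegral nu setT k.
Proof.
move=> mg mh mk bg bh bk ghk.
have ig := bnd_int nu _ _ mg bg; have ih := bnd_int nu _ _ mh bh; have ik := bnd_int nu _ _ mk bk.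
rewrite -RintegralB //.
have mgh : measurable_fun setT (fun x => g x - h x) by exact: measurable_realfun.measurable_funB.
apply: le_trans (le_normr_Rintegral _ _) _ => //.
  apply: (bnd_int nu _ (Mg + Mh) mgh) => x.
  by apply: le_trans (ler_normB _ _) _; apply: lerD.
apply: le_Rintegral => //.
  apply: (bnd_int nu _ (Mg + Mh)); first exact: measurableT_comp.
  by move=> x; rewrite normr_id; apply: le_trans (ler_normB _ _) _; apply: lerD.
Qed.

Lemma absp_le (a b c d : R) :
  Num.sqrt (a^+2 + b^+2) <= Num.sqrt (c^+2 + d^+2) + (`|a - c| + `|b - d|).
Proof.
have nK : forall y : R, `|y|^+2 = y^+2 by move=> y; rewrite real_normK // num_real.
set S := Num.sqrt (c^+2 + d^+2).
have S0 : 0 <= S := sqrtr_ge0 _.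
have SS : S^+2 = c^+2 + d^+2 by rewrite sqr_sqrtr // addr_ge0 // sqr_ge0.
have hc : `|c| <= S by rewrite -(sqrtr_sqr c); apply: ler_wsqrtr; rewrite lerDl sqr_ge0.
have hd : `|d| <= S by rewrite -(sqrtr_sqr d); apply: ler_wsqrtr; rewrite lerDr sqr_ge0.
have ha : `|a| <= `|c| + `|a - c|.
  by have := ler_normD (a - c) c; rewrite subrK addrC.
have hb : `|b| <= `|d| + `|b - d|.
  by have := ler_normD (b - d) d; rewrite subrK addrC.
have u0 := normr_ge0 (a - c); have v0 := normr_ge0 (b - d).
have a0 := normr_ge0 a; have b0 := normr_ge0 b.
have c0 := normr_ge0 c; have d0 := normr_ge0 d.
apply: le_trans (ler_wsqrtr (_ : a^+2 + b^+2 <= (S + (`|a - c| + `|b - d|))^+2)) _.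
  rewrite -(nK a) -(nK b) -(nK c) -(nK d) in SS *.
  move: S0 SS ha hb hc hd u0 v0 a0 b0 c0 d0.
  move: `|a| `|b| `|c| `|d| `|a - c| `|b - d| S => A B C D U W S' S0 SS ha hb hc hd u0 v0 a0 b0 c0 d0.
  nra.
by rewrite sqrtr_sqr ger0_norm // addr_ge0 // addr_ge0.
Qed.

Lemma contM (f g : V -> R) : continuous f -> continuous g -> continuous (fun x => f x * g x).
Proof. by move=> cf cg x; apply: (@cvgM _ _ (nbhs x) (nbhs_filter x)); [exact: cf | exact: cg]. Qed.

Definition ef b (xi : V) (x : V) : R := trig b (2 * pi * dotv x xi).
Definition Ft b (nu : probability T R) xi := Rintegral nu setT (ef b xi : T -> R).
Definition Tt r b (nu : probability T R) xi :=
  Rintegral nu setT ((fun x => cutoff r x * ef b xi x) : T -> R).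
Definition If r (nu : probability T R) := Rintegral nu setT (cutoff r : T -> R).

Lemma ef_cont b xi : continuous (ef b xi).
Proof. exact: e_cont. Qed.

Lemma ef_le1 b xi x : `|ef b xi x| <= 1.
Proof. exact: trig_le1. Qed.

Lemma cef_cont r b xi : continuous (fun x => cutoff r x * ef b xi x).
Proof. by apply: contM; [exact: cutoff_cont | exact: ef_cont]. Qed.

Lemma cef_le1 r b xi x : `|cutoff r x * ef b xi x| <= 1.
Proof.
rewrite normrM -[1]mulr1; apply: ler_pM => //; last exact: ef_le1.
by rewrite ger0_norm ?cutoff_ge0 ?cutoff_le1.
Qed.

Lemma cutoff_abs r x : `|cutoff r x| <= 1.
Proof. by rewrite ger0_norm ?cutoff_ge0 ?cutoff_le1. Qed.

Lemma ocutoff_cont r : continuous (fun x => 1 - cutoff r x).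
Proof. by move=> x; apply: (@cvgB _ _ _ (nbhs x) (nbhs_filter x)); [exact: cvg_cst | exact: cutoff_cont]. Qed.

Lemma Ft_Tt r b nu xi : `|Ft b nu xi - Tt r b nu xi| <= 1 - If r nu.
Proof.
have -> : 1 - If r nu = Rintegral nu setT ((fun x => 1 - cutoff r x) : T -> R).
  rewrite RintegralB //; first by rewrite Rint_cst.
    by apply: (bnd_int nu _ 1); [exact: measurable_cst | move=> _; rewrite normr1].
  by apply: (bnd_int nu _ 1); [exact: cont_meas (cutoff_cont r) | exact: cutoff_abs].
apply: (GI nu _ _ _ 1 1 1).
- exact: cont_meas (ef_cont b xi).
- exact: cont_meas (cef_cont r b xi).
- exact: cont_meas (ocutoff_cont r).
- exact: ef_le1.
- exact: cef_le1.
- move=> x; have := cutoff_ge0 r x; have := cutoff_le1 r x.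
  rewrite ler_norml => ? ?; apply/andP; split; lra.
- move=> x; rewrite -{1}[ef b xi x]mul1r -mulrBl normrM.
  rewrite ger0_norm; last by rewrite subr_ge0 cutoff_le1.
  rewrite -[X in _ <= X]mulr1; apply: ler_wpM2l; last exact: ef_le1.
  by rewrite subr_ge0 cutoff_le1.
Qed.


Lemma Tt_lip r b nu xi eta : 0 <= r ->
  `|Tt r b nu xi - Tt r b nu eta| <= 2 * pi * (s%:R * (r + 1)) * `|xi - eta|.
Proof.
move=> r0; have p0 : 0 <= 2 * pi :> R by rewrite mulr_ge0 // pi_ge0.
have K0 : 0 <= 2 * pi * (s%:R * (r + 1)) * `|xi - eta|.
  by rewrite !mulr_ge0 //; lra.
rewrite -[X in _ <= X](Rint_cst nu).
apply: (GI nu _ _ _ 1 1 (2 * pi * (s%:R * (r + 1)) * `|xi - eta|)).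
- exact: cont_meas (cef_cont r b xi).
- exact: cont_meas (cef_cont r b eta).
- exact: measurable_cst.
- exact: cef_le1.
- exact: cef_le1.
- by move=> _; rewrite ger0_norm.
move=> x; rewrite -mulrBr normrM (ger0_norm (cutoff_ge0 r x)).
apply: le_trans (ler_wpM2l (cutoff_ge0 r x) (trig_lip b _ _)) _.
rewrite -mulrBr dotvBr normrM (ger0_norm p0).
apply: le_trans (ler_wpM2l (cutoff_ge0 r x) (ler_wpM2l p0 (dotv_le x (xi - eta)))) _.
have h := cutoff_norm r x r0.
have -> : cutoff r x * (2 * pi * (s%:R * (`|x| * `|xi - eta|))) =
  (2 * pi * s%:R * `|xi - eta|) * (cutoff r x * `|x|) by ring.
have -> : 2 * pi * (s%:R * (r + 1)) * `|xi - eta| =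
  (2 * pi * s%:R * `|xi - eta|) * (r + 1) by ring.
by apply: ler_wpM2l => //; rewrite mulr_ge0 // mulr_ge0.
Qed.

Lemma Ft_le1 b nu xi : `|Ft b nu xi| <= 1.
Proof.
have := (GI nu (ef b xi) (fun=> 0) (fun=> 1) 1 1 1).
rewrite !Rint_cst subr0; apply.
- exact: cont_meas (ef_cont b xi).
- exact: measurable_cst.
- exact: measurable_cst.
- exact: ef_le1.
- by move=> _; rewrite normr0.
- by move=> _; rewrite normr1.
- by move=> x; rewrite subr0 ef_le1.
Qed.

Lemma If_le1 r nu : If r nu <= 1.
Proof.
have := (GI nu (cutoff r) (fun=> 0) (fun=> 1) 1 1 1).
rewrite !Rint_cst subr0 => h.
apply: le_trans (ler_norm _) _; apply: h.
- exact: cont_meas (cutoff_cont r).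
- exact: measurable_cst.
- exact: measurable_cst.
- exact: cutoff_abs.
- by move=> _; rewrite normr0.
- by move=> _; rewrite normr1.
- by move=> x; rewrite subr0 cutoff_abs.
Qed.

Lemma If_supp r (nu : probability T R) (K : set V) :
  compact K -> nu (~` K) = 0%E -> (forall x, K x -> `|x| <= r) -> If r nu = 1.
Proof.
move=> cK nK Kr.
have mK : measurable (~` K : set T).
  apply: sub_sigma_algebra; rewrite /=; apply: closed_openC.
  by apply: compact_closed => //; exact: hausdorff_normedModType.
have e1 : 1 - If r nu = Rintegral nu setT ((fun x => 1 - cutoff r x) : T -> R).
  rewrite RintegralB //; first by rewrite Rint_cst.
    by apply: (bnd_int nu _ 1); [exact: measurable_cst | move=> _; rewrite normr1].
  by apply: (bnd_int nu _ 1); [exact: cont_meas (cutoff_cont r) | exact: cutoff_abs].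
have := (GI nu (fun x => 1 - cutoff r x) (fun=> 0) (\1_(~` K)) 1 1 1).
rewrite Rint_cst subr0 -e1.
have -> : Rintegral nu setT (\1_(~` K) : T -> R) = 0.
  rewrite /Rintegral integral_indic //= setIT.
  by rewrite nK.
move=> h; apply/eqP; rewrite eq_le If_le1 /=.
suff : `|1 - If r nu| <= 0 by rewrite normr_le0 subr_eq0 => /eqP <-.
apply: h.
- exact: cont_meas (ocutoff_cont r).
- exact: measurable_cst.
- exact: measurable_realfun.measurable_indic.
- move=> x; have := cutoff_ge0 r x; have := cutoff_le1 r x.
  rewrite ler_norml => ? ?; apply/andP; split; lra.
- by move=> _; rewrite normr0.
- by move=> x; rewrite indicE; case: (_ \in _); rewrite ?normr0 ?normr1.
move=> x; rewrite subr0 indicE.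
have [xK|xK] := pselect (K x).
  rewrite cutoff1 ?Kr // subrr normr0.
  by case: (_ \in _).
have -> : x \in ~` K by rewrite in_setC; apply/negP; rewrite inE.
have := cutoff_ge0 r x; have := cutoff_le1 r x.
rewrite ler_norml /= => ? ?; apply/andP; split; lra.
Qed.


Lemma intvecB (m k : 'rV[int]_s) : @intvec R s (m - k) = @intvec R s m - @intvec R s k.
Proof. by apply/rowP => i; rewrite !mxE intrB. Qed.

Lemma norm_le_coord (v : V) c : 0 <= c -> (forall i, `|v ord0 i| <= c) -> `|v| <= c.
Proof.
move=> c0 h; have -> : `|v| = mx_norm v by [].
rewrite mx_normrE; apply/bigmax_leP; split => // -[a i] _ /=.
by rewrite (ord1 a) h.
Qed.

Definition Aa r nu xi := Num.sqrt (Tt r true nu xi ^+ 2 + Tt r false nu xi ^+ 2).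

Lemma ftabsE (nu : probability T R) xi :
  ft_abs nu xi = Num.sqrt (Ft true nu xi ^+ 2 + Ft false nu xi ^+ 2).
Proof. by []. Qed.

Lemma Aa_lip r nu xi eta : 0 <= r ->
  Aa r nu xi <= Aa r nu eta + 2 * (2 * pi * (s%:R * (r + 1)) * `|xi - eta|).
Proof.
move=> r0; rewrite /Aa; apply: le_trans (absp_le _ _ (Tt r true nu eta) (Tt r false nu eta)) _; rewrite lerD2l.
have h1 := Tt_lip r true nu xi eta r0; have h2 := Tt_lip r false nu xi eta r0.
move: h1 h2; set X := 2 * pi * _ * _ => h1 h2; lra.
Qed.

Lemma ft_lower r nu xi : Aa r nu xi <= ft_abs nu xi + 2 * (1 - If r nu).
Proof.
rewrite ftabsE /Aa; apply: le_trans (absp_le _ _ (Ft true nu xi) (Ft false nu xi)) _; rewrite lerD2l.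
have h1 := Ft_Tt r true nu xi; have h2 := Ft_Tt r false nu xi.
rewrite distrC in h1; rewrite distrC in h2; lra.
Qed.

Lemma ftabs_le2 (nu : probability T R) xi : ft_abs nu xi <= 2.
Proof.
rewrite ftabsE; apply: le_trans (absp_le _ _ 0 0) _.
rewrite expr0n /= addr0 sqrtr0 add0r !subr0.
have := Ft_le1 true nu xi; have := Ft_le1 false nu xi; lra.
Qed.

Lemma ftabs_ge0 (nu : probability T R) xi : 0 <= ft_abs nu xi.
Proof. exact: sqrtr_ge0. Qed.

Lemma ft_Aa r (nu : probability T R) xi : If r nu = 1 -> ft_abs nu xi = Aa r nu xi.
Proof.
move=> h; rewrite ftabsE /Aa.
have e b : Ft b nu xi = Tt r b nu xi.
  apply/eqP; rewrite -subr_eq0 -normr_le0.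
  by have := Ft_Tt r b nu xi; rewrite h subrr.
by rewrite !e.
Qed.

Lemma main_sec (mu_ : nat -> probability T R) (mu : probability T R) :
  compact_support mu ->
  weak_cvg (fun n => (mu_ n : {measure set T -> \bar R})) mu ->
  zero_set mu = set0 ->
  exists nk : nat -> nat, {homo nk : a b / (a < b)%N >-> (a < b)%N} /\
    exists eps0 : R, 0 < eps0 /\
      forall x : 'rV[R]_s, @unit_cube R s x ->
        forall k : nat, exists m : 'rV[int]_s,
          eps0 < ft_abs (mu_ (nk k)) (x + @intvec R s m).
Proof.
move=> [K [cK muK]] wc Z0.
have [r [r0 Kr]] : exists r : R, 0 <= r /\ forall x, K x -> `|x| <= r.
  have [M [Mreal HM]] := compact_bounded cK.
  exists (`|M| + 1); split; first by rewrite addr_ge0.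
  by move=> x Kx; apply: (HM (`|M| + 1)) => //; rewrite (le_lt_trans (real_ler_norm Mreal)) // ltrDl.
have Imu : If r mu = 1 := If_supp r mu K cK muK Kr.
have Fa xi : ft_abs mu xi = Aa r mu xi := ft_Aa r mu xi Imu.
set C := 2 * pi * (s%:R * (r + 1)).
have C0 : 0 <= C by rewrite !mulr_ge0 ?pi_ge0 //; lra.
pose G (x : V) := sup (range (fun m : 'rV[int]_s => ft_abs mu (x + @intvec R s m))).
have Gub x : has_ubound (range (fun m : 'rV[int]_s => ft_abs mu (x + @intvec R s m))).
  by exists 2 => _ [m _ <-]; exact: ftabs_le2.
have Gne x : range (fun m : 'rV[int]_s => ft_abs mu (x + @intvec R s m)) !=set0.
  by exists (ft_abs mu (x + @intvec R s 0)); exists 0.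
have Gge x m : ft_abs mu (x + @intvec R s m) <= G x.
  by apply: (ub_le_sup (Gub x)); exists m.
have Glip x y : G x <= G y + 2 * C * `|x - y|.
  apply: ge_sup (Gne x) _ => _ [m _ <-].
  rewrite Fa; apply: le_trans (Aa_lip r mu (x + @intvec R s m) (y + @intvec R s m) r0) _.
  rewrite -Fa -/C mulrA.
  have -> : x + @intvec R s m - (y + @intvec R s m) = x - y.
    by rewrite opprD addrACA subrr addr0.
  by apply: lerD (Gge y m) _.
have Gcont : continuous G.
  apply: (lip_cont _ (2 * C)) => x y; rewrite ler_norml.
  have := Glip x y; have := Glip y x; rewrite distrC.
  set d := 2 * C * _ => h1 h2; apply/andP; split; lra.
have Gpos (x : V) : (forall i, 0 <= x ord0 i <= 1) -> 0 < G x.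
  move=> hx; pose k : 'rV[int]_s := \row_i Num.floor (x ord0 i).
  pose y := x - @intvec R s k.
  have yc : unit_cube y.
    move=> i; rewrite /y !mxE.
    have := floor_le (x ord0 i); have := floorD1_gt (x ord0 i).
    rewrite intrD => h1 h2; apply/andP; split; lra.
  have : ~ zero_set mu y by rewrite Z0.
  move=> /not_andP [//|] /existsNP [m hm].
  apply: lt_le_trans (Gge x (m - k)); rewrite intvecB.
  have -> : x + (@intvec R s m - @intvec R s k) = y + @intvec R s m.
    by rewrite addrA [RHS]addrAC.
  by rewrite lt_neqAle ftabs_ge0 andbT eq_sym; apply/eqP.
pose cc := [set v : V | forall i, `[0, 1]%classic (v ord0 i)].
have ccc : compact cc.
  have := @rV_compact R s (fun=> `[0, 1]%classic) (fun=> @segment_compact R 0 1).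
  exact.
have Gc : compact (G @` cc).
  by apply: continuous_compact => //; exact: continuous_subspaceT.
have [e e0 He] : exists2 e, 0 < e & forall x, cc x -> e <= G x.
  apply: contrapT => H.
  have : closure (G @` cc) 0.
    move=> B /nbhs_ballP [e e0 hB].
    have : ~ (forall x, cc x -> e <= G x) by move=> h; apply: H; exists e.
    move=> /existsNP [x] /not_implyP [cx] /negP; rewrite -ltNge => Gxe.
    exists (G x); split; first by exists x.
    apply: hB; rewrite -ball_normE /= sub0r normrN ger0_norm //.
    apply: ltW; apply: Gpos => i; have := cx i; rewrite /= in_itv /=; exact.
  have Gcl : closed (G @` cc) by apply: compact_closed => //; exact: hausdorff_normedModType.
  move=> /Gcl [x cx Gx0].
  suff : 0 < G x by rewrite Gx0 ltxx.
  apply: Gpos => i.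
  by have := cx i; rewrite /= in_itv /=.
have supp : exists K' : set V, compact K' /\ forall x, ~ K' x -> cutoff r x = 0.
  exists (closed_ball_ (@Num.Def.normr _ _) (0 : V) (r + 1)); split.
    apply: bounded_closed_compact; last exact: closed_closed_ball_.
    exists (r + 1); split; first by rewrite num_real.
    move=> M hM x; rewrite /closed_ball_ /= sub0r normrN => hx.
    by apply: le_trans hx (ltW hM).
  move=> x; rewrite /closed_ball_ /= sub0r normrN => /negP; rewrite -ltNge => hx.
  by apply: cutoff0; exact: ltW.
have [K' [cK' hK']] := supp.
have wcT (xi : V) b : (fun n => Tt r b (mu_ n) xi) @ \oo --> Tt r b mu xi.
  apply: (wc (fun x => cutoff r x * ef b xi x) (cef_cont r b xi)).
  by exists K'; split => // x /hK' ->; rewrite mul0r.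
have wcI : (fun n => If r (mu_ n)) @ \oo --> If r mu.
  by apply: (wc (cutoff r) (cutoff_cont r)); exists K'.
pose N := (Num.truncn (16 * C / e)).+1.
have N0 : 0 < N%:R :> R by rewrite ltr0Sn.
have hCN : C * N%:R^-1 <= e / 16.
  have hN : 16 * C / e < N%:R := truncnS_gt _.
  rewrite ltr_pdivrMr // in hN.
  rewrite ler_pdivrMr //.
  move: hN; set n' := N%:R; move=> hN; nra.
pose pt (j : {ffun 'I_s -> 'I_N}) : V := \row_i ((j i)%:R / N%:R).
have ptc j : cc (pt j).
  move=> i; rewrite /= in_itv /= mxE divr_ge0 //= ler_pdivrMr // mul1r.
  by rewrite ler_nat ltnW.
have : forall j : {ffun 'I_s -> 'I_N}, exists m : 'rV[int]_s,
    e / 2 < ft_abs mu (pt j + @intvec R s m).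
  move=> j; have := He _ (ptc j) => hG.
  have : e / 2 < G (pt j) by apply: lt_le_trans hG; lra.
  by move=> /(sup_gt (Gne _)) [_ [m _ <-] hm]; exists m.
case/choice => m hm.
pose q j := pt j + @intvec R s (m j).
have ev1 : \forall n \near \oo, forall j : {ffun 'I_s -> 'I_N}, forall b : bool,
    `|Tt r b mu (q j) - Tt r b (mu_ n) (q j)| < e / 16.
  apply: filter_forall => j; apply: filter_forall => b.
  have e16 : 0 < e / 16 by rewrite divr_gt0.
  exact: (cvgr_dist_lt _ _ (wcT (q j) b) _ e16).
have ev2 : \forall n \near \oo, `|If r mu - If r (mu_ n)| < e / 16.
  have e16 : 0 < e / 16 by rewrite divr_gt0.
  exact: (cvgr_dist_lt _ _ wcI _ e16).
case: (filterI ev1 ev2) => N1 _ HN1.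
exists (fun k => (k + N1)%N); split.
  by move=> a b; rewrite ltn_add2r.
exists (e / 8); split; first by rewrite divr_gt0.
move=> x cx k.
have [h1 h2] := HN1 (k + N1)%N (leq_addl _ _).
set n := (k + N1)%N in h1 h2 *.
pose j : {ffun 'I_s -> 'I_N} := [ffun i => inord (Num.truncn (x ord0 i * N%:R))].
have xge i : 0 <= x ord0 i * N%:R.
  by apply: mulr_ge0; [case/andP: (cx i) | exact: ltW].
have jv i : (j i : nat) = Num.truncn (x ord0 i * N%:R).
  rewrite ffunE inordK // truncn_lt_nat //.
  rewrite -[X in _ < X]mul1r ltr_pM2r //; by case/andP: (cx i).
exists (m j).
set xi := x + @intvec R s (m j).
have dist : `|xi - q j| <= N%:R^-1.
  rewrite /xi /q opprD addrACA subrr addr0.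
  apply: norm_le_coord => [|i]; first by rewrite invr_ge0 ltW.
  rewrite !mxE jv.
  have := truncn_itv (xge i).
  set t := Num.truncn _ => /andP [ht1 ht2].
  have -> : x ord0 i - t%:R / N%:R = (x ord0 i * N%:R - t%:R) * N%:R^-1.
    by field; rewrite gt_eqF.
  rewrite normrM (@ger0_norm _ (N%:R^-1)); last by rewrite invr_ge0 ltW.
  rewrite -[leRHS]mul1r.
  apply: ler_wpM2r; first by rewrite invr_ge0 ltW.
  rewrite -natr1 in ht2.
  rewrite ler_norml; apply/andP; split; lra.
have hA1 := ft_lower r (mu_ n) xi.
have hA2 := Aa_lip r (mu_ n) (q j) xi r0.
have hd : C * `|q j - xi| <= e / 16.
  by apply: le_trans hCN; apply: ler_wpM2l => //; rewrite distrC.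
have hA3 := absp_le (Tt r true mu (q j)) (Tt r false mu (q j))
  (Tt r true (mu_ n) (q j)) (Tt r false (mu_ n) (q j)).
have hA4 := hm j; rewrite Fa in hA4; rewrite -/(q j) in hA4.
have hb1 := h1 j true; have hb2 := h1 j false.
rewrite Imu in h2.
have hI : 1 - If r (mu_ n) < e / 16 by apply: le_lt_trans (ler_norm _) h2.
rewrite /Aa in hA1 hA2 hA4.
rewrite -/C in hA2.
move: hA1 hA2 hA3 hA4 hb1 hb2 hI hd.
lra.
Qed.
End S.

Theorem lemma3p7 (R : realType) (s : nat)
  (mu_ : nat -> probability (borelRs R s) R) (mu : probability (borelRs R s) R) :
  (forall n, compact_support (mu_ n)) ->
  compact_support mu ->
  weak_cvg (fun n => (mu_ n : {measure set (borelRs R s) -> \bar R})) mu ->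
  zero_set mu = set0 ->
  exists nk : nat -> nat, {homo nk : a b / (a < b)%N >-> (a < b)%N} /\
    exists eps0 : R, 0 < eps0 /\
      forall x : 'rV[R]_s, @unit_cube R s x ->
        forall k : nat, exists m : 'rV[int]_s,
          eps0 < ft_abs (mu_ (nk k)) (x + @intvec R s m).
Proof.
move=> _ hmu wc Z0.
exact: (@main_sec R s mu_ mu hmu wc Z0).
Qed.
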